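(* Fix a mobile user $k$, a frame length $T\in\mathbb{N}$, $T\ge 1$, a threshold $\varepsilon\in[0,1]$ and a request probability $\lambda_k\in[0,1]$. For every frame index $q\in\{0,1,2,\ldots\}$, with $\mathcal{T}_q=\{qT,qT+1,\ldots,(q+1)T-1\}$ and $$\Delta\mathcal{L}_k[qT]=\mathbb{E}\left\{\tfrac12 (Y_k[qT+T])^2-\tfrac12 (Y_k[qT])^2 \,\Big|\, Y_k[qT]\right\},$$ we have $$\Delta \mathcal{L}_k[qT]\leq B_{k,2}T+\mathbb{E}\left\{Y_k[qT]\sum_{n\in\mathcal{T}_q}\left(X_k[n]-\varepsilon \right)\,\Big|\, Y_k[qT] \right\},$$ where $B_{k,2}\triangleq \tfrac12(\lambda_k+\varepsilon^2)+\tfrac12(T-1)\left[(1-\varepsilon)\lambda_k+\varepsilon^2\right]$.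
   Context: Time is slotted, $n=0,1,2,\ldots$. In each slot $n$, mobile user $k$ issues a digital-twin synchronization request indicated by $a_k[n]\in\{0,1\}$; the $a_k[n]$ are i.i.d. over slots with $\Pr(a_k[n]=1)=\lambda_k$, and $a_k[n]$ is independent of everything that happened before slot $n$ (in particular, for $n\ge qT$, $a_k[n]$ is independent of $Y_k[qT]$). The synchronization failure indicator $X_k[n]\in\{0,1\}$ equals $1$ only if a request is made and it fails (the twin is migrating during slot $n$, or the synchronization delay exceeds its deadline), so in particular $X_k[n]\le a_k[n]$. The virtual queue is defined by $Y_k[0]=0$ and $Y_k[n+1]=\max\{Y_k[n]+X_k[n]-\varepsilon,\,0\}$. *)

(* Defs.v *)
From HB Require Import structures.
From mathcomp Require Import all_boot all_order all_algebra.
From mathcomp Require Import all_classical all_reals all_analysis.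
Set Implicit Arguments. Unset Strict Implicit. Unset Printing Implicit Defensive.
Import Order.TTheory GRing.Theory Num.Theory.
Local Open Scope classical_set_scope.
Local Open Scope ring_scope.

Fixpoint vqueue (R : realType) (T : Type) (X : nat -> T -> R) (eps : R)
    (n : nat) (w : T) : R :=
  match n with
  | 0 => 0
  | n'.+1 => Num.max (vqueue X eps n' w + X n' w - eps) 0
  end.

(* Elementary conditional expectation of Z given the (discrete) random
   variable Y, on the event {Y = y}:  E[Z 1_{Y=y}] / P(Y = y). *)
Definition condexp_at (R : realType) (d : measure_display) (T : measurableType d)
    (P : probability T R) (Z Y : T -> R) (y : R) : R :=
  fine (\int[P]_(w in [set w | Y w = y]) (Z w)%:E) / fine (P [set w | Y w = y]).

(* Main.v *)
Require Import Defs.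
From HB Require Import structures.
From mathcomp Require Import all_boot all_order all_algebra.
From mathcomp Require Import all_classical all_reals all_analysis.
Import Order.TTheory GRing.Theory Num.Theory.
Local Open Scope classical_set_scope.
Local Open Scope ring_scope.
From mathcomp Require Import ring lra.

Section Path.
Variables (R : realType) (Om : Type) (X a : nat -> Om -> R) (eps : R).
Hypothesis he : 0 <= eps <= 1.
Hypothesis hX : forall n w, X n w = 0 \/ X n w = 1.
Hypothesis ha : forall n w, a n w = 0 \/ a n w = 1.
Hypothesis hXa : forall n w, X n w <= a n w.

Lemma Y_ge0 n w : 0 <= vqueue X eps n w.
Proof. by case: n => //= n; rewrite le_max lexx orbT. Qed.

Lemma Y_up n w : vqueue X eps n.+1 w <= vqueue X eps n w + 1 - eps.
Proof.
rewrite /= ge_max; have := Y_ge0 n w; move: he => /andP [e0 e1].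
move=> y0; by case: (hX n w) => ->; apply/andP; split; lra.
Qed.

Lemma Y_dn n w : vqueue X eps n w + X n w - eps <= vqueue X eps n.+1 w.
Proof. by rewrite /= le_max lexx. Qed.

Lemma Y_sq n w : vqueue X eps n.+1 w ^+ 2 <= (vqueue X eps n w + X n w - eps) ^+ 2.
Proof.
rewrite /=; set u := _ - eps.
rewrite /Num.max; case: ifP => h; first by rewrite expr2 mul0r sqr_ge0.
by [].
Qed.

Lemma Y_range t k w :
  - (k%:R * eps) <= vqueue X eps (t + k) w - vqueue X eps t w <= k%:R * (1 - eps).
Proof.
elim: k => [|k IH]; first by rewrite addn0 subrr !mul0r oppr0 lexx.
rewrite addnS; have := Y_up (t + k) w; have := Y_dn (t + k) w.
case: (hX (t+k) w) => ->; rewrite -(addn1 k) natrD; move: IH; case/andP: he => e0 e1.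
  move=> /andP[h1 h2] h3 h4; apply/andP; split; lra.
move=> /andP[h1 h2] h3 h4; apply/andP; split; lra.
Qed.

Lemma step_ineq (Yk Y1 Yt x av e kk S H : R) : 0 <= e <= 1 -> (x = 0 \/ x = 1) ->
  (av = 0 \/ av = 1) -> x <= av -> 0 <= kk -> Y1 ^+ 2 <= (Yk + x - e) ^+ 2 ->
  - (kk * e) <= Yk - Yt <= kk * (1 - e) -> 0 <= Yt ->
  2^-1 * Yk ^+ 2 - 2^-1 * Yt ^+ 2 <= Yt * S + H ->
  2^-1 * Y1 ^+ 2 - 2^-1 * Yt ^+ 2 <=
  Yt * (S + (x - e)) + (H + (2^-1 * (av + e ^+ 2) + kk * ((1 - e) * av + e ^+ 2))).
Proof.
move=> /andP[e0 e1] hx hA hxa k0 hs /andP[h1 h2] y0 IH.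
have A1 : (Yk - Yt) * (1 - e) <= kk * (1 - e) * (1 - e).
  by apply: ler_wpM2r; lra.
have A2 : (Yk - Yt) * (- e) <= kk * e * e.
  by rewrite mulrN -mulNr; apply: ler_wpM2r; lra.
have A3 : kk * ((1 - e) * (1 - e)) <= kk * ((1 - e) + e ^+ 2).
  by apply: ler_wpM2l => //; nra.
case: hx hxa hs => ->; case: hA => -> //; try lra; nra.
Qed.

Definition hterm t j w : R :=
  2^-1 * (a (t + j) w + eps ^+ 2) + j%:R * ((1 - eps) * a (t + j) w + eps ^+ 2).

Lemma pathwise t k w :
  2^-1 * vqueue X eps (t + k) w ^+ 2 - 2^-1 * vqueue X eps t w ^+ 2 <=
  vqueue X eps t w * (\sum_(t <= n < t + k) (X n w - eps)) + \sum_(j < k) hterm t j w.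
Proof.
elim: k => [|k IH]; first by rewrite addn0 subrr big_geq ?addn0 // big_ord0 mulr0 addr0.
rewrite big_ord_recr addnS big_nat_recr /=; last exact: leq_addr.
apply: (step_ineq (vqueue X eps (t + k) w)) => //.
- exact: Y_sq.
- exact: Y_range.
- exact: Y_ge0.
Qed.
End Path.
Section Meas.
Variables (R : realType) (d : measure_display) (Om : measurableType d) (P : probability Om R).

Definition good (f : Om -> R) := measurable_fun setT f /\ exists M, forall x, `|f x| <= M.

Lemma good_cst c : good (fun _ => c).
Proof. split; first exact: measurable_cst. by exists `|c|. Qed.

Lemma good_add f g : good f -> good g -> good (fun w => f w + g w).
Proof.
move=> [mf [M1 h1]] [mg [M2 h2]]; split; first exact: measurable_realfun.measurable_funD.
exists (M1 + M2) => x; exact: (le_trans (ler_normD _ _) (lerD (h1 x) (h2 x))).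
Qed.

Lemma good_mul f g : good f -> good g -> good (fun w => f w * g w).
Proof.
move=> [mf [M1 h1]] [mg [M2 h2]]; split; first exact: measurable_realfun.measurable_funM.
exists (M1 * M2) => x; rewrite normrM; apply: ler_pM => //.
Qed.

Lemma good_max0 f : good f -> good (fun w => Num.max (f w) 0).
Proof.
move=> [mf [M h]]; split.
  exact: (measurable_realfun.measurable_maxr mf (measurable_cst (0:R))).
exists M => x; rewrite /Num.max; case: ifP => _ //.
by rewrite normr0 (le_trans (normr_ge0 _) (h x)).
Qed.

Lemma good_sum (I : Type) (s : seq I) (Pr : pred I) (F : I -> Om -> R) :
  (forall i, good (F i)) -> good (fun w => \sum_(i <- s | Pr i) F i w).
Proof.
move=> hF; elim: s => [|i s IH].
  by under [X in good X]funext => w do rewrite big_nil; exact: good_cst.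
under [X in good X]funext => w do rewrite big_cons.
case: (Pr i); last exact: IH.
exact: good_add.
Qed.

Lemma good_int D f : measurable D -> good f -> P.-integrable D (EFin \o f).
Proof.
move=> mD [mf [M h]]; apply: measurable_bounded_integrable => //.
- by rewrite (le_lt_trans (probability_le1 P mD)) ?ltry.
- exact: measurable_funS mf.
- exists M; split; first by rewrite num_real.
  by move=> M' hM' x _ /=; exact: (le_trans (h x) (ltW hM')).
Qed.

Lemma Rint_sum D (I : Type) (s : seq I) (Pr : pred I) (F : I -> Om -> R) :
  measurable D -> (forall i, good (F i)) ->
  Rintegral P D (fun w => \sum_(i <- s | Pr i) F i w) = \sum_(i <- s | Pr i) Rintegral P D (F i).
Proof.
move=> mD hF; elim: s => [|i s IH].
  rewrite big_nil; under eq_Rintegral => w _ do rewrite big_nil.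
  by rewrite Rintegral_cst // mul0r.
rewrite big_cons; under eq_Rintegral => w _ do rewrite big_cons.
case: (Pr i); last exact: IH.
rewrite RintegralD //; first by rewrite IH.
- exact: good_int mD (hF i).
- by apply: good_int => //; apply: good_sum.
Qed.

End Meas.
Arguments good {R d Om}.
Arguments good_cst {R d Om}.
Arguments good_add {R d Om}.
Arguments good_mul {R d Om}.
Arguments good_max0 {R d Om}.
Arguments good_sum {R d Om}.
Arguments good_int {R d Om P}.
Arguments Rint_sum {R d Om P}.

Lemma sum_identity (R : realType) (T : nat) (e lam p : R) :
  \sum_(j < T) ((2^-1 + j%:R * (1 - e)) * (lam * p) + (2^-1 * e ^+ 2 + j%:R * e ^+ 2) * p)
  = (2^-1 * (lam + e ^+ 2) + 2^-1 * (T%:R - 1) * ((1 - e) * lam + e ^+ 2)) * T%:R * p.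
Proof.
elim: T => [|T IH]; first by rewrite big_ord0 !mulr0 mul0r.
rewrite big_ord_recr /= IH -(addn1 T) natrD; by field.
Qed.

Theorem lemma2 (R : realType) (d : measure_display) (Omega : measurableType d)
    (P : probability Omega R)
    (F : nat -> set (set Omega))       (* events that happened before slot n *)
    (a X : nat -> Omega -> R)          (* requests a_k[n], failures X_k[n] *)
    (T : nat) (eps lam : R) :
  (1 <= T)%N ->
  0 <= eps <= 1 ->
  0 <= lam <= 1 ->
  (* history filtration *)
  (forall n, sigma_algebra setT (F n)) ->
  (forall n, F n `<=` measurable) ->
  (forall n, F n `<=` F n.+1) ->
  (forall n B, measurable B -> F n.+1 (a n @^-1` B)) ->
  (forall n B, measurable B -> F n.+1 (X n @^-1` B)) ->
  (* binary indicators, X_k[n] <= a_k[n] *)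
  (forall n w, a n w = 0 \/ a n w = 1) ->
  (forall n w, X n w = 0 \/ X n w = 1) ->
  (forall n w, X n w <= a n w) ->
  (* identically distributed Bernoulli(lam) requests *)
  (forall n, P [set w | a n w = 1] = lam%:E) ->
  (* a_k[n] is independent of everything before slot n *)
  (forall n A B, F n A -> measurable B ->
     P (a n @^-1` B `&` A) = (P (a n @^-1` B) * P A)%E) ->
  (* in particular, a_k[n] is independent of Y_k[qT] for n >= qT *)
  (forall q n B C, (q * T <= n)%N -> measurable B -> measurable C ->
     P (a n @^-1` B `&` vqueue X eps (q * T) @^-1` C)
     = (P (a n @^-1` B) * P (vqueue X eps (q * T) @^-1` C))%E) ->
  let Y := vqueue X eps in
  let B2 := 2^-1 * (lam + eps ^+ 2)
            + 2^-1 * (T%:R - 1) * ((1 - eps) * lam + eps ^+ 2) in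
  forall (q : nat) (y : R), (0 < P [set w | Y (q * T)%N w = y])%E ->
    condexp_at P (fun w => 2^-1 * (Y (q * T + T)%N w) ^+ 2
                           - 2^-1 * (Y (q * T)%N w) ^+ 2) (Y (q * T)%N) y
    <= B2 * T%:R
       + condexp_at P (fun w => Y (q * T)%N w
                         * \sum_(q * T <= n < q * T + T) (X n w - eps))
                    (Y (q * T)%N) y.
Proof.
move=> hT he hl hsig hFm hFmono hFa hFX ha hX hXa hPa hind1 hind Y B2 q y hpos.
have mX : forall n, measurable_fun setT (X n).
  by move=> n _ B mB; rewrite setTI; apply: hFm; apply: hFX.
have ma : forall n, measurable_fun setT (a n).
  by move=> n _ B mB; rewrite setTI; apply: hFm; apply: hFa.
have gX : forall n, good (X n).
  move=> n; split => //; exists 1 => w; by case: (hX n w) => ->; rewrite ?normr0 ?normr1.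
have ga : forall n, good (a n).
  move=> n; split => //; exists 1 => w; by case: (ha n w) => ->; rewrite ?normr0 ?normr1.
have gY : forall n, good (Y n).
  elim=> [|n IH]; first exact: good_cst.
  apply: good_max0; apply: good_add; first exact: good_add.
  exact: good_cst.
set t := (q * T)%N.
set D := [set w | Y t w = y].
have mD : measurable D.
  have m1 : measurable [set y] by exact: measurable_set1.
  by have := (gY t).1 measurableT _ m1; rewrite setTI.
have finD : P D \is a fin_num by apply: fin_num_measure.
set p := fine (P D).
have p0 : 0 < p by apply: fine_gt0; rewrite hpos /= ltey_eq finD.
have cE : forall Z, condexp_at P Z (Y t) y = Rintegral P D Z / p by [].
rewrite !cE ler_pdivrMr // mulrDl divfK ?gt_eqF //.
have inta : forall j, Rintegral P D (a (t + j)) = lam * p.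
  move=> j.
  have -> : Rintegral P D (a (t + j)) = Rintegral P D (\1_(a (t + j) @^-1` [set 1])).
    apply: eq_Rintegral => w _ /=.
    case: (ha (t + j) w) => E; rewrite E.
      rewrite memNset //= E => h01.
      have h2 : (0:R) = 1 := h01; by move/eqP: h2; rewrite eq_sym oner_eq0.
    by rewrite mem_set.
  rewrite /Rintegral integral_indic //; last first.
    have m1 : measurable [set (1:R)] by exact: measurable_set1.
    by have := (ma (t + j)) measurableT _ m1; rewrite setTI.
  have m1 : measurable [set (1:R)] by exact: measurable_set1.
  have my : measurable [set y] by exact: measurable_set1.
  have E : P (a (t + j) @^-1` [set 1] `&` D) = (lam%:E * P D)%E.
    rewrite -(hPa (t + j)).
    exact: (hind q (t + j) [set 1] [set y] (leq_addr _ _) m1 my).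
  apply: (@eq_trans _ _ (fine (lam%:E * P D)%E)); first exact: (f_equal fine E).
  by rewrite -(fineK finD) -EFinM.
set h := fun w => \sum_(j < T) ((2^-1 + j%:R * (1 - eps)) * a (t + j) w
                                 + (2^-1 * eps ^+ 2 + j%:R * eps ^+ 2)).
have gh : good h.
  apply: good_sum => j; apply: good_add; last exact: good_cst.
  by apply: good_mul; [exact: good_cst | exact: ga].
set g := fun w => Y t w * \sum_(t <= n < t + T) (X n w - eps).
have gg : good g.
  apply: good_mul => //; apply: good_sum => n; apply: good_add => //; exact: good_cst.
have gf : good (fun w => 2^-1 * (Y (t + T)%N w) ^+ 2 - 2^-1 * (Y t w) ^+ 2).
  apply: good_add; first by apply: good_mul; [exact: good_cst | apply: good_mul].
  under [X in good X]funext => w do rewrite -mulNr.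
  by apply: good_mul; [exact: good_cst | apply: good_mul].
have inth : Rintegral P D h = B2 * T%:R * p.
  rewrite /h Rint_sum //; last first.
    move=> j; apply: good_add; last exact: good_cst.
    by apply: good_mul; [exact: good_cst | exact: ga].
  rewrite -sum_identity; apply: eq_bigr => j _.
  rewrite RintegralD //; last 2 first.
  - apply: good_int mD _; apply: good_mul; [exact: good_cst | exact: ga].
  - exact: good_int mD (good_cst _).
  by rewrite RintegralZl // ?inta ?Rintegral_cst //; apply: good_int mD (ga _).
rewrite -inth addrC -RintegralD //; last 2 first.
- exact: good_int mD gg.
- exact: good_int mD gh.
apply: le_Rintegral => //.
- exact: good_int mD gf.
- by apply: good_int => //; apply: good_add.
move=> w _.
apply: (le_trans (@pathwise R Omega X a eps he hX ha hXa t T w)).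
rewrite lerD2l /h; apply: ler_sum => j _; rewrite /hterm; lra.
Qed.
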